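(* For every positive integer $s$ and all integers $i\ge 0$ and $j$, the number $h_{s,i,j}$ defined in the context is an integer.
   Context: For a fixed positive integer $s$, the numbers $h_{s,i,j}$ (integers $i\ge 0$, $j$) are defined recursively by: $h_{s,i,j}=0$ if $j\le i$; for $i=0$ and $j\ge 1$, $h_{s,0,j}=\binom{s+j-1}{j}\frac{s-j}{s}$; for $i>0$ and $j>i$, $h_{s,i,j}=-\frac{s-j+1}{i}h_{s,i-1,j-1}-\frac{j-i}{i}h_{s,i-1,j}$. *)

(* Defs.v *)
From mathcomp Require Import all_boot all_order all_algebra.
Set Implicit Arguments. Unset Strict Implicit. Unset Printing Implicit Defensive.
Import Order.TTheory GRing.Theory Num.Theory.
Local Open Scope ring_scope.

Fixpoint h (s i : nat) (j : int) {struct i} : rat :=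
  match i with
  | 0%N =>
      match j with
      | Posz jn =>
          if (jn == 0)%N then 0
          else ('C(s + jn - 1, jn))%:R * ((s%:R - jn%:R) / s%:R)
      | Negz _ => 0
      end
  | i'.+1 =>
      if (j <= (i'.+1)%:Z)%R then 0
      else - ((s%:R - j%:~R + 1) / (i'.+1)%:R) * h s i' (j - 1)
           - ((j%:~R - (i'.+1)%:R) / (i'.+1)%:R) * h s i' j
  end.

(* Main.v *)
Require Import Defs.
From mathcomp Require Import all_boot all_order all_algebra.
From mathcomp Require Import zify ring lra.
Import GRing.Theory Num.Theory.
Local Open Scope ring_scope.

Definition gbz (n : int) (k : nat) : int :=
  match n with
  | Posz m => ('C(m, k))%:Z
  | Negz m => (-1) ^+ k * ('C(m + k, k))%:Z
  end.

Lemma gbz0 n : gbz n 0 = 1.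
Proof. by case: n => m /=; rewrite ?bin0 ?addn0 ?bin0 ?mulr1. Qed.

Lemma gbz_abs n k : (k.+1)%:Z * gbz n k.+1 = n * gbz (n - 1) k.
Proof.
case: n => [[|m]|m].
- by rewrite /= bin0n mulr0 mul0r.
- have -> : (m.+1%:Z - 1) = m%:Z by lia.
  rewrite /= -!PoszM; congr Posz.
  by have := mul_bin_diag m.+1 k => /= ->.
- have -> : Negz m - 1 = Negz m.+1 by rewrite !NegzE; lia.
  rewrite /gbz exprS.
  have H : (k.+1 * 'C(m + k.+1, k.+1) = m.+1 * 'C(m + k.+1, k))%N.
    by rewrite mul_bin_left; congr (_ * _)%N; lia.
  have -> : (m.+1 + k = m + k.+1)%N by lia.
  rewrite NegzE.
  have -> : (k.+1%:Z) * (-1 * (-1) ^+ k * 'C(m + k.+1, k.+1)%:Z)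
      = - ((-1) ^+ k * (k.+1 * 'C(m + k.+1, k.+1))%N%:Z) by rewrite PoszM; ring.
  rewrite H PoszM. ring.
Qed.

Lemma intrz (n : nat) : (Posz n)%:~R = n%:R :> rat.
Proof. by []. Qed.

Section S.
Variable s : nat.

Definition Bz (i a : nat) : int := gbz (i%:Z - a%:Z) i.
Definition Ez (a m : nat) : int :=
  if (a <= m)%N then gbz (m%:Z - 1 - s%:Z) (m - a) else 0.

Lemma Brec i a : (i.+1)%:Z * Bz i.+1 a = (i.+1%:Z - a%:Z) * Bz i a.
Proof.
rewrite /Bz gbz_abs; congr (_ * gbz _ _); lia.
Qed.

Lemma Erec n a : (n.+1%:Z - a%:Z) * Ez a n.+1 = (n.+1%:Z - 1 - s%:Z) * Ez a n.
Proof.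
rewrite /Ez; case: (ltngtP a n.+1) => Ha.
- have Ha' : (a <= n)%N by lia.
  rewrite Ha'.
  have -> : (n.+1 - a = (n - a).+1)%N by lia.
  have -> : (n.+1%:Z - a%:Z) = ((n - a).+1)%:Z by lia.
  rewrite gbz_abs; congr (_ * gbz _ _); lia.
- have -> : (a <= n)%N = false by lia.
  by rewrite !mulr0.
- have -> : (a <= n)%N = false by lia.
  by rewrite Ha subrr mul0r mulr0.
Qed.

Definition fz (n : nat) : int :=
  if n == 0%N then 0 else ('C(s + n - 1, n))%:Z - ('C(s + n - 1, n - 1))%:Z.

Fixpoint cfun (m : nat) : nat -> int :=
  match m with
  | 0%N => fun _ => 0
  | m'.+1 => fun a => if (a < m')%N then cfun m' a
                      else if a == m' then fz m' - \sum_(b < m') cfun m' b * Ez b m'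
                      else 0
  end.

Definition c a := cfun a.+1 a.

Lemma cfunE m a : (a < m)%N -> cfun m a = c a.
Proof.
elim: m => [//|m IH] Ham /=.
case: ifP => H; first exact: IH.
have -> : a = m by lia.
by rewrite /c /= ltnn.
Qed.

Lemma csum n : \sum_(a < n.+1) c a * Ez a n = fz n.
Proof.
rewrite big_ord_recr /=.
have -> : Ez n n = 1 by rewrite /Ez leqnn subnn gbz0.
rewrite mulr1 {2}/c /= ltnn eqxx.
rewrite addrC -addrA [X in _ + X](_ : _ = 0) ?addr0 //.
rewrite addrC; apply/eqP; rewrite subr_eq0; apply/eqP.
by apply: eq_bigr => b _; rewrite cfunE.
Qed.

Definition F i n := \sum_(a < n.+1) c a * Bz i a * Ez a n.

Hypothesis spos : (0 < s)%N.

Lemma h0 n : h s 0 (Posz n) = (fz n)%:~R.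
Proof.
rewrite /= /fz; case: eqP => // Hn.
have key : ('C(s + n - 1, n) * n = s * 'C(s + n - 1, n - 1))%N.
  case: n Hn => [//|n] _.
  rewrite mulnC mul_bin_left; congr (_ * _)%N; [lia | congr 'C(_, _); lia].
have key' : ('C(s + n - 1, n)%:R * n%:R = s%:R * 'C(s + n - 1, n - 1)%:R :> rat).
  by rewrite -!natrM key.
rewrite intrB !intrz.
have s0 : (s%:R : rat) != 0 by rewrite pnatr_eq0 -lt0n.
have -> : ('C(s + n - 1, n - 1)%:R : rat) = 'C(s + n - 1, n)%:R * n%:R / s%:R.
  by rewrite key' mulrC mulrA mulVf // mul1r.
by field.
Qed.


Lemma hz i n : (n <= i)%N -> h s i (Posz n) = 0.
Proof.
case: i => [|i] Hn /=.
- by have -> : n = 0%N by lia.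
- by rewrite lez_nat Hn.
Qed.

Lemma hrec i n : h s i.+1 (Posz n.+1) =
  - ((s%:R - n.+1%:R + 1) / (i.+1)%:R) * h s i (Posz n)
  - ((n.+1%:R - (i.+1)%:R) / (i.+1)%:R) * h s i (Posz n.+1).
Proof.
rewrite [LHS]/= lez_nat.
case: ifP => H.
- rewrite hz; last by lia.
  have [Hl|Hg] := leqP n.+1 i.
  + by rewrite hz // !mulr0 subrr.
  + have -> : n = i by lia.
    by rewrite subrr mul0r mulr0 mul0r subrr.
- have -> : (Posz n.+1 - 1) = Posz n by lia.
  by [].
Qed.

Lemma main i n : h s i (Posz n) = (F i n)%:~R.
Proof.
elim: i n => [|i IH] n.
- rewrite h0 /F; congr intmul; rewrite -csum; apply: eq_bigr => a _.
  by rewrite /Bz gbz0 mulr1.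
case: n => [|n].
- rewrite hz // /F big_ord1 /c /= /fz /= big_ord0 subr0 !mul0r //.
rewrite hrec !IH.
have -> : F i n = \sum_(a < n.+2) c a * Bz i a * Ez a n.
  rewrite big_ord_recr /= /Ez ltnn mulr0 addr0 //.
rewrite /F !rmorph_sum !mulr_sumr -sumrB /=.
apply: eq_bigr => a _.
have Hb := Brec i a.
have He := Erec n a.
have i0 : ((i.+1)%:R : rat) != 0 by rewrite pnatr_eq0.
have Hb' : (Bz i.+1 a)%:~R = ((i.+1)%:R - a%:R) * (Bz i a)%:~R / (i.+1)%:R :> rat.
  apply: (mulfI i0). rewrite -[X in X * _ = _]intrz -intrM Hb intrM intrB !intrz.
  by rewrite mulrCA mulfV ?mulr1.
have He' : ((n.+1)%:R - a%:R) * (Ez a n.+1)%:~R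
          = ((n.+1)%:R - 1 - s%:R) * (Ez a n)%:~R :> rat.
  move: He => /(congr1 (fun z : int => z%:~R : rat)); rewrite !intrM !intrB !intrz. by [].
rewrite ?intrM ?rmorphM Hb'; symmetry.
apply/eqP; rewrite -subr_eq0; apply/eqP.
transitivity ((c a)%:~R * (Bz i a)%:~R *
   (((n.+1)%:R - a%:R) * (Ez a n.+1)%:~R - ((n.+1)%:R - 1 - s%:R) * (Ez a n)%:~R)
   / (i.+1)%:R : rat).
  by ring.
by rewrite He' subrr mulr0 mul0r.
Qed.

End S.

Theorem corollary7 (s i : nat) (j : int) :
  (0 < s)%N -> exists z : int, h s i j = z%:~R.
Proof.
move=> spos; case: j => [n|n].
- by exists (F s i n); exact: main.
- exists 0; case: i => [//|i] /=.
  by [].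
Qed.
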